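(* Let $\kappa$ be an infinite cardinal. The map $f\colon S\to S$ defined by $f(A,B,C)=(\kappa\setminus A,\ \kappa\setminus(B\cup C),\ \kappa\setminus(A\cup B\cup C))$ for all $(A,B,C)\in S$ is a well-defined Banaschewski function on $S$.
   Context: $\mathcal{F}(\kappa)$ is the Boolean lattice of subsets $X\subseteq\kappa$ that are finite or cofinite. Let $\mu(A,B,C)=(A\cap B)\cup(A\cap C)\cup(B\cap C)$; a triple is balanced if $A\cap B=A\cap C=B\cap C$. $S$ is the set of balanced triples $(A,B,C)\in\mathcal{F}(\kappa)^3$ with $C\setminus\mu(A,B,C)$ finite, ordered componentwise; it is a bounded lattice with componentwise meet, join $(A,B,C)\vee(A',B',C')=(U_1\cup m,U_2\cup m,U_3\cup m)$ where $U_1=A\cup A'$, $U_2=B\cup B'$, $U_3=C\cup C'$, $m=\mu(U_1,U_2,U_3)$, and bounds $(\emptyset,\emptyset,\emptyset)$, $(\kappa,\kappa,\kappa)$. A Banaschewski function on a bounded lattice $L$ is a map $f\colon L\to L$ such that $x\le y$ implies $f(x)\ge f(y)$, and $x\wedge f(x)=0_L$, $x\vee f(x)=1_L$ for all $x\in L$. *)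

(* Defs.v *)
From mathcomp Require Import all_boot.
From mathcomp Require Import boolp classical_sets cardinality.
Set Implicit Arguments. Unset Strict Implicit. Unset Printing Implicit Defensive.
Local Open Scope classical_set_scope.

(* The infinite cardinal kappa is modelled by an arbitrary type T whose
   full set is infinite; subsets of kappa are elements of [set T]. *)

Definition finco {T : Type} (X : set T) : Prop :=
  finite_set X \/ finite_set (~` X).

Definition mu {T : Type} (A B C : set T) : set T :=
  (A `&` B) `|` (A `&` C) `|` (B `&` C).

Definition balanced {T : Type} (A B C : set T) : Prop :=
  A `&` B = A `&` C /\ A `&` C = B `&` C.

Definition triple (T : Type) := (set T * set T * set T)%type.

Definition inS {T : Type} (x : triple T) : Prop :=
  let: (A, B, C) := x in
  [/\ finco A, finco B, finco C, balanced A B C & finite_set (C `\` mu A B C)].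

Definition leS {T : Type} (x y : triple T) : Prop :=
  let: (A, B, C) := x in let: (A', B', C') := y in
  [/\ A `<=` A', B `<=` B' & C `<=` C'].

Definition meetS {T : Type} (x y : triple T) : triple T :=
  let: (A, B, C) := x in let: (A', B', C') := y in
  (A `&` A', B `&` B', C `&` C').

Definition joinS {T : Type} (x y : triple T) : triple T :=
  let: (A, B, C) := x in let: (A', B', C') := y in
  let U1 := A `|` A' in let U2 := B `|` B' in let U3 := C `|` C' in
  let m := mu U1 U2 U3 in
  (U1 `|` m, U2 `|` m, U3 `|` m).

Definition botS (T : Type) : triple T := (set0, set0, set0).
Definition topS (T : Type) : triple T := (setT, setT, setT).

(* Banaschewski function on the bounded lattice carried by the predicate P
   (with the given order, meet, join and bounds); "well-defined" = maps P into P. *)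
Definition Banaschewski_on {L : Type} (P : L -> Prop) (le : L -> L -> Prop)
  (meet join : L -> L -> L) (bot top : L) (f : L -> L) : Prop :=
  [/\ (forall x, P x -> P (f x)),
      (forall x y, P x -> P y -> le x y -> le (f y) (f x)),
      (forall x, P x -> meet x (f x) = bot)
    & (forall x, P x -> join x (f x) = top)].

Definition fS {T : Type} (x : triple T) : triple T :=
  let: (A, B, C) := x in
  (~` A, ~` (B `|` C), ~` (A `|` B `|` C)).

(* Main.v *)
Require Import Defs.
From mathcomp Require Import all_boot.
From mathcomp Require Import boolp classical_sets cardinality.
Local Open Scope classical_set_scope.

Lemma finco_C (T : Type) (X : set T) : finco X -> finco (~` X).
Proof. by rewrite /finco setCK => -[]; [right|left]. Qed.

Lemma finco_U (T : Type) (X Y : set T) : finco X -> finco Y -> finco (X `|` Y).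
Proof.
rewrite /finco => -[hX|hX] [hY|hY].
- by left; rewrite finite_setU; split.
- by right; apply: (sub_finite_set _ hY) => x; rewrite /setC /setU /=; tauto.
- by right; apply: (sub_finite_set _ hX) => x; rewrite /setC /setU /=; tauto.
- by right; apply: (sub_finite_set _ hX) => x; rewrite /setC /setU /=; tauto.
Qed.

Ltac sets := apply/seteqP; split => ? /=; rewrite /mu /setI /setU /setC /=;
  repeat (match goal with |- context [?P ?z] => is_var P; is_var z;
    lazymatch goal with H : P z |- _ => fail | H : ~ P z |- _ => fail | _ =>
    case: (pselect (P z)) => ? end end); tauto.

Theorem lemma4p1 (T : Type) (hT : infinite_set [set: T]) :
  Banaschewski_on (@inS T) (@leS T) (@meetS T) (@joinS T) (botS T) (topS T) (@fS T).
Proof.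
split.
- move=> [[A B] C] [hA hB hC _ _] /=.
  split; try by repeat (apply: finco_C || apply: finco_U).
  + by split; sets.
  + have -> : ~` (A `|` B `|` C) `\` mu (~` A) (~` (B `|` C)) (~` (A `|` B `|` C)) = set0 by sets.
    exact: finite_set0.
- move=> [[A B] C] [[A' B'] C'] _ _ [h1 h2 h3] /=; split => x /=; rewrite /setC /setU /=.
  + by move=> H ?; apply: H; apply: h1.
  + by move=> H [?|?]; apply: H; [left; apply: h2|right; apply: h3].
  + by move=> H [[?|?]|?]; apply: H; [left;left; apply: h1|left;right; apply: h2|right; apply: h3].
- move=> [[A B] C] _ /=; rewrite /botS; congr (_, _, _); sets.
- move=> [[A B] C] _ /=; rewrite /topS; congr (_, _, _); sets.
Qed.
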